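(* (i) Let $I$ be a set and $R\colon I\times I\to[0,1]$ a fuzzy equivalence. Then $([0,1]^I,g_R)$ is a monadic Pavelka algebra, where $[0,1]^I$ is the power of the standard Pavelka algebra. (ii) Let $(\mathbf A,\exists)$ be a monadic Pavelka algebra with $\mathbf A$ semisimple. Then there exist a set $I$, a fuzzy equivalence $R$ on $I$, and an injective homomorphism of Pavelka algebras $e\colon A\to[0,1]^I$ such that $e(\exists(x))=g_R(e(x))$ for all $x\in A$.
   Context: An MV-algebra $(A;\oplus,\neg,0)$ carries derived operations $1=\neg0$, $x\cdot y=\neg(\neg x\oplus\neg y)$, $x\rightarrow y=\neg x\oplus y$, lattice order $x\le y$ iff $\neg x\oplus y=1$. The standard MV-algebra is $[0,1]$ with $x\oplus y=\min\{x+y,1\}$, $\neg x=1-x$. A Pavelka algebra is $\mathbf A=(A;\oplus,\neg,\{\mathbf r\mid r\in[0,1]\cap\mathbb Q\})$ with $(A;\oplus,\neg,\mathbf 0)$ an MV-algebra, $\mathbf r\oplus\mathbf s=\mathbf t$ whenever $\min\{r+s,1\}=t$, $\neg\mathbf r=\mathbf s$ whenever $1-r=s$. The standard Pavelka algebra is $[0,1]$ with $\mathbf r$ interpreted as $r$; $[0,1]^I$ is its power. $\mathbf A$ is semisimple if its MV-reduct is a subdirect product of simple MV-algebras. A monadic Pavelka algebra is $(\mathbf A,\exists)$ with $\exists$ a closure operator (monotone, $x\le\exists x$, $\exists\exists x=\exists x$) such that $\exists(\neg\exists(x))=\neg\exists(x)$ and $\mathbf r\cdot\exists(x)=\exists(\mathbf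 r\cdot x)$ for all $x$ and constants $\mathbf r$. A fuzzy equivalence on $I$ is $R\colon I\times I\to[0,1]$ with $R(i,i)=1$, $R(i,j)=R(j,i)$, $R(i,j)\cdot R(j,k)\le R(i,k)$. For such $R$, $g_R\colon[0,1]^I\to[0,1]^I$, $g_R(x)(i)=\bigvee_{j\in I}(R(i,j)\cdot x(j))$. *)

(* Defs.v *)
From Stdlib Require Import Reals Lra QArith Qreals ClassicalEpsilon.
Open Scope R_scope.

Section MV.
Context {A : Type} (oplus : A -> A -> A) (neg : A -> A) (zero : A).

Definition mv_one : A := neg zero.
Definition mv_prod (x y : A) : A := neg (oplus (neg x) (neg y)).
Definition mv_le (x y : A) : Prop := oplus (neg x) y = mv_one.

Record is_MV : Prop := {
  mv_assoc : forall x y z, oplus x (oplus y z) = oplus (oplus x y) z;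
  mv_comm  : forall x y, oplus x y = oplus y x;
  mv_zero  : forall x, oplus x zero = x;
  mv_negneg : forall x, neg (neg x) = x;
  mv_absorb : forall x, oplus x (neg zero) = neg zero;
  mv_luk : forall x y, oplus (neg (oplus (neg x) y)) y = oplus (neg (oplus (neg y) x)) x
}.

Definition mv_ideal (J : A -> Prop) : Prop :=
  J zero /\ (forall x y, J y -> mv_le x y -> J x) /\
  (forall x y, J x -> J y -> J (oplus x y)).

Definition mv_simple : Prop :=
  zero <> mv_one /\
  forall J, mv_ideal J -> (forall x, J x <-> x = zero) \/ (forall x, J x).
End MV.

Definition mv_hom {A B : Type} (oA : A -> A -> A) (nA : A -> A) (zA : A)
  (oB : B -> B -> B) (nB : B -> B) (zB : B) (h : A -> B) : Prop :=
  (forall x y, h (oA x y) = oB (h x) (h y)) /\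
  (forall x, h (nA x) = nB (h x)) /\ h zA = zB.

(** Semisimple: the MV-algebra is (isomorphic to) a subdirect product of
    simple MV-algebras, i.e. there is an injective homomorphism into a
    product of simple MV-algebras all of whose coordinate maps are onto. *)
Definition mv_semisimple {A : Type} (oplus : A -> A -> A) (neg : A -> A) (zero : A) : Prop :=
  exists (J : Type) (B : J -> Type)
         (oB : forall j, B j -> B j -> B j) (nB : forall j, B j -> B j)
         (zB : forall j, B j) (h : A -> forall j, B j),
    (forall j, is_MV (oB j) (nB j) (zB j) /\ mv_simple (oB j) (nB j) (zB j)) /\
    mv_hom oplus neg zero
      (fun f g j => oB j (f j) (g j)) (fun f j => nB j (f j)) (fun j => zB j) h /\
    (forall x y, h x = h y -> x = y) /\
    (forall j (b : B j), exists x, h x j = b).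

Definition unitQ := {q : Q | (0 <= q /\ q <= 1)%Q}.
Lemma qzero_prf : (0 <= 0 /\ 0 <= 1)%Q. Proof. split; discriminate. Qed.
Definition qzero : unitQ := exist _ 0%Q qzero_prf.
Definition qval (r : unitQ) : R := Q2R (proj1_sig r).

Definition is_pavelka {A : Type} (oplus : A -> A -> A) (neg : A -> A)
  (c : unitQ -> A) : Prop :=
  is_MV oplus neg (c qzero) /\
  (forall r s t : unitQ, qval t = Rmin (qval r + qval s) 1 -> oplus (c r) (c s) = c t) /\
  (forall r s : unitQ, qval s = 1 - qval r -> neg (c r) = c s).

Definition pavelka_hom {A B : Type} (oA : A -> A -> A) (nA : A -> A) (cA : unitQ -> A)
  (oB : B -> B -> B) (nB : B -> B) (cB : unitQ -> B) (h : A -> B) : Prop :=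
  (forall x y, h (oA x y) = oB (h x) (h y)) /\
  (forall x, h (nA x) = nB (h x)) /\ (forall r, h (cA r) = cB r).

Definition is_monadic_pavelka {A : Type} (oplus : A -> A -> A) (neg : A -> A)
  (c : unitQ -> A) (ex : A -> A) : Prop :=
  let z := c qzero in
  is_pavelka oplus neg c /\
  (forall x y, mv_le oplus neg z x y -> mv_le oplus neg z (ex x) (ex y)) /\
  (forall x, mv_le oplus neg z x (ex x)) /\
  (forall x, ex (ex x) = ex x) /\
  (forall x, ex (neg (ex x)) = neg (ex x)) /\
  (forall x (r : unitQ), mv_prod oplus neg (c r) (ex x) = ex (mv_prod oplus neg (c r) x)).

Definition unitR := {x : R | 0 <= x <= 1}.

Lemma u_oplus_prf (x y : unitR) : 0 <= Rmin (proj1_sig x + proj1_sig y) 1 <= 1.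
Proof. destruct x as [x Hx], y as [y Hy]; simpl.
  unfold Rmin; destruct Rle_dec; lra. Qed.
Definition u_oplus (x y : unitR) : unitR := exist _ _ (u_oplus_prf x y).

Lemma u_neg_prf (x : unitR) : 0 <= 1 - proj1_sig x <= 1.
Proof. destruct x as [x Hx]; simpl; lra. Qed.
Definition u_neg (x : unitR) : unitR := exist _ _ (u_neg_prf x).

Lemma u_const_prf (r : unitQ) : 0 <= qval r <= 1.
Proof. destruct r as [q [H0 H1]]; unfold qval; simpl.
  apply Qle_Rle in H0; apply Qle_Rle in H1.
  rewrite RMicromega.Q2R_0 in H0. rewrite RMicromega.Q2R_1 in H1. lra. Qed.
Definition u_const (r : unitQ) : unitR := exist _ _ (u_const_prf r).

(* Lukasiewicz product on [0,1] (the derived MV product x.y = max(0, x+y-1)) *)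
Definition u_prod (x y : unitR) : unitR := mv_prod u_oplus u_neg x y.

Definition pw_oplus {I : Type} (f g : I -> unitR) : I -> unitR := fun i => u_oplus (f i) (g i).
Definition pw_neg {I : Type} (f : I -> unitR) : I -> unitR := fun i => u_neg (f i).
Definition pw_const {I : Type} (r : unitQ) : I -> unitR := fun _ => u_const r.

Definition fuzzy_equiv {I : Type} (Rel : I -> I -> unitR) : Prop :=
  (forall i, proj1_sig (Rel i i) = 1) /\
  (forall i j, Rel i j = Rel j i) /\
  (forall i j k, proj1_sig (u_prod (Rel i j) (Rel j k)) <= proj1_sig (Rel i k)).

(** Supremum of a set of reals (its least upper bound when it exists). *)
Definition Rsup (E : R -> Prop) : R := epsilon (inhabits 0) (fun m => is_lub E m).

Definition gR_set {I : Type} (Rel : I -> I -> unitR) (x : I -> unitR) (i : I) : R -> Prop :=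
  fun v => exists j, v = proj1_sig (u_prod (Rel i j) (x j)).

Lemma gR_set_lub {I : Type} (Rel : I -> I -> unitR) (x : I -> unitR) (i : I) :
  exists m, is_lub (gR_set Rel x i) m.
Proof.
  destruct (completeness (gR_set Rel x i)) as [m Hm].
  - exists 1. intros v [j ->]. destruct (u_prod (Rel i j) (x j)) as [w Hw]; simpl; lra.
  - exists (proj1_sig (u_prod (Rel i i) (x i))). exists i. reflexivity.
  - exists m; exact Hm.
Qed.

Lemma gR_prf {I : Type} (Rel : I -> I -> unitR) (x : I -> unitR) (i : I) :
  0 <= Rsup (gR_set Rel x i) <= 1.
Proof.
  pose proof (epsilon_spec (inhabits 0) (fun m => is_lub (gR_set Rel x i) m)
                (gR_set_lub Rel x i)) as [Hub Hl].
  fold (Rsup (gR_set Rel x i)) in Hub, Hl.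
  split.
  - apply Rle_trans with (proj1_sig (u_prod (Rel i i) (x i))).
    + destruct (u_prod (Rel i i) (x i)) as [w Hw]; simpl; lra.
    + apply Hub. exists i; reflexivity.
  - apply Hl. intros v [j ->]. destruct (u_prod (Rel i j) (x j)) as [w Hw]; simpl; lra.
Qed.

Definition gR {I : Type} (Rel : I -> I -> unitR) (x : I -> unitR) : I -> unitR :=
  fun i => exist _ (Rsup (gR_set Rel x i)) (gR_prf Rel x i).

(* Main.v *)
Require Import Defs.

Module UF.
From mathcomp Require Import all_boot classical_sets boolp filter.
Lemma ultra (T : Type) (F : (T -> Prop) -> Prop) :
  F (fun _ => True) ->
  (forall P Q, F P -> F Q -> F (fun x => P x /\ Q x)) ->
  (forall P Q : T -> Prop, (forall x, P x -> Q x) -> F P -> F Q) ->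
  (forall P, F P -> exists x, P x) ->
  exists U : (T -> Prop) -> Prop,
    (forall P, F P -> U P) /\
    (forall P Q, U P -> U Q -> U (fun x => P x /\ Q x)) /\
    (forall P Q : T -> Prop, (forall x, P x -> Q x) -> U P -> U Q) /\
    (forall P, U P -> exists x, P x) /\
    (forall P, U P \/ U (fun x => ~ P x)).
Proof.
move=> FT FI FS Fex.
have FF : ProperFilter F.
  apply: Build_ProperFilter_ex.
    by move=> P /Fex.
  split.
  - exact: FT.
  - by move=> P Q HP HQ; apply: FI.
  - by move=> P Q PQ; apply: FS.
have [G [GU FG]] := ultraFilterLemma FF.
exists G; split; first by move=> P /FG.
split; first by move=> P Q HP HQ; exact: (filterI HP HQ).
split; first by move=> P Q PQ; apply: filterS.
split; first by move=> P GP; have [x Px] := filter_ex GP; exists x.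
by move=> P; exact: (in_ultra_setVsetC P GU).
Qed.
End UF.

From Stdlib Require Import Reals QArith Qreals ClassicalEpsilon.
From Stdlib Require Import Lra ZArith ProofIrrelevance FunctionalExtensionality Classical List.

Open Scope R_scope.

Notation val := (@proj1_sig R (fun x => 0 <= x <= 1)).

Ltac rcases := unfold Rmin, Rmax in *; repeat (destruct (Rle_dec _ _)); try lra.

Lemma valP (x : unitR) : 0 <= val x <= 1.
Proof. exact (proj2_sig x). Qed.

Ltac bnd := repeat match goal with
  | |- context [proj1_sig ?t] =>
      lazymatch goal with H : 0 <= proj1_sig t <= 1 |- _ => fail | _ => pose proof (valP t) end
  | H0 : context [proj1_sig ?t] |- _ =>
      lazymatch goal with H : 0 <= proj1_sig t <= 1 |- _ => fail | _ => pose proof (valP t) end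
  end.

Lemma unitR_eq (x y : unitR) : val x = val y -> x = y.
Proof.
  destruct x as [x Hx], y as [y Hy]; simpl; intros ->.
  f_equal; apply proof_irrelevance.
Qed.

Lemma qval_bounds (r : unitQ) : 0 <= qval r <= 1.
Proof. exact (u_const_prf r). Qed.

Lemma qval_zero : qval qzero = 0.
Proof. unfold qval, qzero; simpl. apply RMicromega.Q2R_0. Qed.

Definition prodR (a b : R) : R := Rmax 0 (a + b - 1).

Lemma val_uprod (a b : unitR) : val (u_prod a b) = prodR (val a) (val b).
Proof.
  unfold u_prod, mv_prod, prodR; simpl. rcases.
Qed.

Lemma prodR_mono a b a' b' : a <= a' -> b <= b' -> prodR a b <= prodR a' b'.
Proof. unfold prodR; intros; rcases. Qed.

Lemma prodR_nonneg a b : 0 <= prodR a b.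
Proof. unfold prodR; rcases. Qed.

Lemma prodR_assoc a b c : 0 <= a <= 1 -> 0 <= b <= 1 -> 0 <= c <= 1 ->
  prodR a (prodR b c) = prodR (prodR a b) c.
Proof. unfold prodR; intros; rcases. Qed.

Lemma prodR_comm a b : prodR a b = prodR b a.
Proof. unfold prodR; rcases. Qed.

Lemma prodR_1 a : 0 <= a -> prodR 1 a = a.
Proof. unfold prodR; intros; rcases. Qed.

Lemma Rsup_lub (E : R -> Prop) : (exists x, E x) -> (exists b, forall x, E x -> x <= b) ->
  is_lub E (Rsup E).
Proof.
  intros [x Ex] [b Hb].
  destruct (completeness E) as [m Hm].
  - exists b; intros y Hy; apply Hb; auto.
  - exists x; auto.
  - exact (epsilon_spec (inhabits 0) (fun m => is_lub E m) (ex_intro _ m Hm)).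
Qed.

Lemma lub_unique (E : R -> Prop) m m' : is_lub E m -> is_lub E m' -> m = m'.
Proof.
  intros [H1 H2] [H3 H4]. apply Rle_antisym; [apply H2; auto | apply H4; auto].
Qed.

Lemma Rsup_eq (E : R -> Prop) m : is_lub E m -> Rsup E = m.
Proof.
  intros H. apply (lub_unique E); auto.
  exact (epsilon_spec (inhabits 0) (fun m => is_lub E m) (ex_intro _ m H)).
Qed.

Section PartI.
Context {I : Type} (Rel : I -> I -> unitR).

Lemma gR_lub (x : I -> unitR) i : is_lub (gR_set Rel x i) (val (gR Rel x i)).
Proof.
  simpl. exact (epsilon_spec (inhabits 0) (fun m => is_lub (gR_set Rel x i) m)
                (gR_set_lub Rel x i)).
Qed.

Lemma gR_ub (x : I -> unitR) i j :
  prodR (val (Rel i j)) (val (x j)) <= val (gR Rel x i).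
Proof.
  destruct (gR_lub x i) as [H _]. apply H. exists j. symmetry; apply val_uprod.
Qed.

Lemma gR_least (x : I -> unitR) i T :
  (forall j, prodR (val (Rel i j)) (val (x j)) <= T) -> val (gR Rel x i) <= T.
Proof.
  intros H. destruct (gR_lub x i) as [_ H2]. apply H2.
  intros v [j ->]. rewrite val_uprod. apply H.
Qed.

Lemma prod_sup (x : I -> unitR) i r T : 0 <= r <= 1 -> 0 <= T ->
  (forall j, prodR r (prodR (val (Rel i j)) (val (x j))) <= T) ->
  prodR r (val (gR Rel x i)) <= T.
Proof.
  intros Hr HT H.
  set (s := val (gR Rel x i)).
  destruct (Rle_dec (r + s - 1) 0) as [Hle|Hlt].
  { unfold prodR; rcases. }
  apply Rnot_lt_le; intro Hc.
  assert (Hs : ~ (s <= T + 1 - r)).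
  { intro. unfold prodR in Hc; rcases. }
  apply Hs. apply gR_least. intros j.
  apply Rnot_lt_le; intro Hj. specialize (H j).
  unfold prodR in *; rcases.
Qed.

Hypothesis HR : fuzzy_equiv Rel.

Lemma gR_trans (x : I -> unitR) i j :
  prodR (val (Rel i j)) (val (gR Rel x j)) <= val (gR Rel x i).
Proof.
  destruct HR as [Hrefl [Hsym Htr]].
  apply prod_sup.
  - apply valP.
  - pose proof (gR_ub x i i). pose proof (prodR_nonneg (val (Rel i i)) (val (x i))). lra.
  - intros k. rewrite prodR_assoc by apply valP.
    eapply Rle_trans; [|apply (gR_ub x i k)].
    apply prodR_mono; [|lra]. rewrite <- val_uprod. apply Htr.
Qed.

Lemma gR_ext (x : I -> unitR) i : val (x i) <= val (gR Rel x i).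
Proof.
  destruct HR as [Hrefl _]. pose proof (gR_ub x i i). rewrite Hrefl in H.
  rewrite prodR_1 in H; [lra | apply valP].
Qed.

End PartI.

Lemma pw_le_iff {I : Type} (x y : I -> unitR) :
  mv_le (@pw_oplus I) (@pw_neg I) (pw_const qzero) x y <-> forall i, val (x i) <= val (y i).
Proof.
  unfold mv_le, mv_one. split.
  - intros H i. apply (f_equal (fun f => val (f i))) in H. simpl in H.
    rewrite qval_zero in H. pose proof (valP (x i)); pose proof (valP (y i)). rcases.
  - intros H. apply functional_extensionality; intro i. apply unitR_eq. simpl.
    rewrite qval_zero. specialize (H i). pose proof (valP (x i)); pose proof (valP (y i)). rcases.
Qed.

Lemma part1 : forall (I : Type) (Rel : I -> I -> unitR),
     fuzzy_equiv Rel ->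
     is_monadic_pavelka (@pw_oplus I) (@pw_neg I) (@pw_const I) (gR Rel).
Proof.
  intros I Rel HR. unfold is_monadic_pavelka. cbv zeta.
  split; [|split; [|split; [|split; [|split]]]].
  - split; [|split].
    + constructor; intros; apply functional_extensionality; intro i; apply unitR_eq;
        simpl; try rewrite qval_zero;
        bnd; rcases.
    + intros r s t Ht. apply functional_extensionality; intro i; apply unitR_eq; simpl.
      pose proof (qval_bounds r); pose proof (qval_bounds s). rewrite Ht. reflexivity.
    + intros r s Ht. apply functional_extensionality; intro i; apply unitR_eq; simpl.
      lra.
  - intros x y Hxy. apply pw_le_iff. rewrite pw_le_iff in Hxy. intro i.
    apply gR_least. intro j. eapply Rle_trans; [|apply (gR_ub Rel y i j)].
    apply prodR_mono; [lra | apply Hxy].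
  - intros x. apply pw_le_iff. intro i. apply gR_ext; auto.
  - intros x. apply functional_extensionality; intro i; apply unitR_eq.
    apply Rle_antisym.
    + apply gR_least. intro j. apply gR_trans; auto.
    + apply gR_ext; auto.
  - intros x. apply functional_extensionality; intro i; apply unitR_eq.
    apply Rle_antisym.
    + apply gR_least. intro j.
      change (val (pw_neg (gR Rel x) j)) with (1 - val (gR Rel x j)).
      change (val (pw_neg (gR Rel x) i)) with (1 - val (gR Rel x i)).
      pose proof HR as [_ [Hsym _]].
      pose proof (gR_trans Rel HR x j i) as H. rewrite Hsym in H.
      pose proof (valP (gR Rel x i)); pose proof (valP (gR Rel x j)).
      pose proof (valP (Rel i j)).
      unfold prodR in *; rcases.
    + apply (gR_ext Rel HR (pw_neg (gR Rel x)) i).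
  - intros x r. apply functional_extensionality; intro i; apply unitR_eq.
    change (val (u_prod (u_const r) (gR Rel x i)) =
            val (gR Rel (fun j => u_prod (u_const r) (x j)) i)).
    rewrite val_uprod. simpl (val (u_const r)).
    apply Rle_antisym.
    + apply prod_sup.
      * apply qval_bounds.
      * pose proof (valP (gR Rel (fun j => u_prod (u_const r) (x j)) i)); lra.
      * intro j. eapply Rle_trans; [|apply (gR_ub Rel _ i j)]. cbv beta. rewrite val_uprod.
        change (val (u_const r)) with (qval r).
        rewrite !prodR_assoc by (apply valP || apply qval_bounds).
        rewrite (prodR_comm (qval r)). lra.
    + apply gR_least. intro j. cbv beta. rewrite val_uprod.
      change (val (u_const r)) with (qval r).
      rewrite prodR_assoc by (apply valP || apply qval_bounds).
      rewrite (prodR_comm (val (Rel i j))). rewrite <- prodR_assoc by (apply valP || apply qval_bounds).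
      apply prodR_mono; [lra|]. apply gR_ub.
Qed.


Definition isQ (x : R) : Prop := exists q : Q, Q2R q = x.

Lemma isQ_qval r : isQ (qval r).
Proof. exists (proj1_sig r). reflexivity. Qed.
Lemma isQ_0 : isQ 0. Proof. exists 0%Q. apply RMicromega.Q2R_0. Qed.
Lemma isQ_1 : isQ 1. Proof. exists 1%Q. apply RMicromega.Q2R_1. Qed.
Lemma isQ_plus x y : isQ x -> isQ y -> isQ (x + y).
Proof. intros [a <-] [b <-]. exists (a + b)%Q. apply Q2R_plus. Qed.
Lemma isQ_minus x y : isQ x -> isQ y -> isQ (x - y).
Proof. intros [a <-] [b <-]. exists (a - b)%Q. apply Q2R_minus. Qed.
Lemma isQ_mult x y : isQ x -> isQ y -> isQ (x * y).
Proof. intros [a <-] [b <-]. exists (a * b)%Q. apply Q2R_mult. Qed.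
Lemma isQ_INR m : isQ (INR m).
Proof.
  induction m. { simpl. apply isQ_0. }
  rewrite S_INR. apply isQ_plus; auto. apply isQ_1.
Qed.
Lemma isQ_min x y : isQ x -> isQ y -> isQ (Rmin x y).
Proof. intros. unfold Rmin. destruct (Rle_dec x y); auto. Qed.

Lemma unitQ_of x : 0 <= x <= 1 -> isQ x -> exists r : unitQ, qval r = x.
Proof.
  intros Hx [q Hq].
  assert (H : (0 <= q /\ q <= 1)%Q).
  { split; apply Rle_Qle; rewrite Hq;
      [rewrite RMicromega.Q2R_0 | rewrite RMicromega.Q2R_1]; lra. }
  exists (exist _ q H). exact Hq.
Qed.

Lemma rat_between a b : a < b -> exists q : Q, a < Q2R q < b.
Proof.
  intros Hab.
  set (d := b - a).
  assert (Hd : 0 < d) by (unfold d; lra).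
  destruct (archimed (/ d)) as [Hn1 Hn2].
  set (n := up (/ d)) in *.
  assert (Hn : 0 < IZR n).
  { pose proof (Rinv_0_lt_compat d Hd). lra. }
  assert (Hnz : (0 < n)%Z) by (apply lt_0_IZR; exact Hn).
  destruct (archimed (a * IZR n)) as [Hm1 Hm2].
  set (m := up (a * IZR n)) in *.
  exists (Qmake m (Z.to_pos n)).
  unfold Q2R; simpl. rewrite Z2Pos.id by exact Hnz.
  assert (Hdn : 1 < d * IZR n).
  { replace 1 with (d * / d) by (field; lra). apply Rmult_lt_compat_l; auto. }
  assert (Ht : / IZR n * IZR n = 1) by (apply Rinv_l; lra).
  assert (Ht0 : 0 < / IZR n) by (apply Rinv_0_lt_compat; lra).
  set (t := / IZR n) in *.
  assert (Hant : a * IZR n * t = a) by (rewrite Rmult_assoc, (Rmult_comm (IZR n) t), Ht; ring).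
  assert (Htd : t < d).
  { assert (t * 1 < t * (d * IZR n)) by (apply Rmult_lt_compat_l; auto).
    replace (t * (d * IZR n)) with (d * (t * IZR n)) in H by ring. rewrite Ht in H. lra. }
  assert (H1 : a * IZR n * t < IZR m * t) by (apply Rmult_lt_compat_r; auto).
  assert (H2 : IZR m * t <= (a * IZR n + 1) * t) by (apply Rmult_le_compat_r; lra).
  replace ((a * IZR n + 1) * t) with (a * IZR n * t + t) in H2 by ring.
  unfold d in *. split; lra.
Qed.

Lemma unitQ_between a b : a < b -> a < 1 -> 0 < b -> exists r : unitQ, a < qval r < b.
Proof.
  intros H1 H2 H3.
  destruct (rat_between (Rmax a 0) (Rmin b 1)) as [q Hq].
  { unfold Rmax, Rmin; repeat destruct (Rle_dec _ _); lra. }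
  destruct (unitQ_of (Q2R q)) as [r Hr].
  { unfold Rmax, Rmin in Hq; repeat destruct (Rle_dec _ _); lra. }
  { exists q; reflexivity. }
  exists r. rewrite Hr. unfold Rmax, Rmin in Hq; repeat destruct (Rle_dec _ _); lra.
Qed.



Section MVB.
Context {B : Type} (o : B -> B -> B) (n : B -> B) (z : B) (HB : is_MV o n z).

Notation le := (mv_le o n z).

Lemma mv_zero_l x : o z x = x.
Proof. rewrite (mv_comm _ _ _ HB). apply (mv_zero _ _ _ HB). Qed.

Lemma mv_nn x : n (n x) = x.
Proof. apply (mv_negneg _ _ _ HB). Qed.

Lemma mv_abs_l x : o (n z) x = n z.
Proof. rewrite (mv_comm _ _ _ HB). apply (mv_absorb _ _ _ HB). Qed.

Lemma mv_nx_x x : o (n x) x = n z.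
Proof.
  pose proof (mv_luk _ _ _ HB x (n z)) as H.
  rewrite (mv_absorb _ _ _ HB), !mv_nn, !mv_zero_l in H. symmetry; exact H.
Qed.

Lemma mv_A x y w : o x (o y w) = o (o x y) w.
Proof. apply (mv_assoc _ _ _ HB). Qed.
Lemma mv_C x y : o x y = o y x.
Proof. apply (mv_comm _ _ _ HB). Qed.

Lemma le_char x y : le x y <-> exists t, y = o x t.
Proof.
  unfold mv_le, mv_one. split.
  - intros H. exists (n (o (n y) x)).
    pose proof (mv_luk _ _ _ HB x y) as L. rewrite H, mv_nn, mv_zero_l in L.
    etransitivity; [exact L | apply mv_C].
  - intros [t ->]. rewrite mv_A, mv_nx_x. apply mv_abs_l.
Qed.

Lemma le_refl x : le x x.
Proof. apply mv_nx_x. Qed.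

Lemma le_trans x y w : le x y -> le y w -> le x w.
Proof.
  rewrite !le_char. intros [t ->] [s ->]. exists (o t s). symmetry; apply mv_A.
Qed.

Lemma le_antisym x y : le x y -> le y x -> x = y.
Proof.
  unfold mv_le, mv_one. intros H1 H2.
  pose proof (mv_luk _ _ _ HB x y) as L. rewrite H1, H2, !mv_nn, !mv_zero_l in L.
  symmetry; exact L.
Qed.

Lemma le_mono x y w : le x y -> le (o x w) (o y w).
Proof.
  rewrite !le_char. intros [t ->]. exists t.
  rewrite <- !mv_A. f_equal. apply mv_C.
Qed.

Lemma le_mono2 x y x' y' : le x y -> le x' y' -> le (o x x') (o y y').
Proof.
  intros H1 H2. apply le_trans with (o y x'). apply le_mono; auto.
  rewrite (mv_C y x'), (mv_C y y'). apply le_mono; auto.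
Qed.

Lemma le_z x : le z x.
Proof. apply mv_abs_l. Qed.

Lemma le_one x : le x (n z).
Proof. unfold mv_le, mv_one. apply (mv_absorb _ _ _ HB). Qed.

Lemma le_neg x y : le x y -> le (n y) (n x).
Proof. unfold mv_le, mv_one. intros H. rewrite mv_nn, mv_C. exact H. Qed.

Lemma mv_G p q : o (o p q) (n (o (n p) (n q))) = o p q.
Proof.
  set (D := n (o (n p) (n q))).
  assert (E1 : o (n q) D = o (n (o p q)) p).
  { unfold D. rewrite mv_C. pose proof (mv_luk _ _ _ HB p (n q)) as L.
    rewrite mv_nn in L. rewrite L. rewrite (mv_C q p). reflexivity. }
  assert (E2 : o p q = o p (n (o (n q) D))).
  { rewrite E1. symmetry. rewrite (mv_C p). rewrite (mv_luk _ _ _ HB (o p q) p).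
    rewrite (mv_A (n p) p q), mv_nx_x, mv_abs_l, mv_nn, mv_zero_l. reflexivity. }
  assert (E3 : o (n (o (n q) D)) D = q).
  { pose proof (mv_luk _ _ _ HB q D) as L. rewrite L.
    unfold D at 1. rewrite mv_nn. rewrite <- mv_A, mv_nx_x.
    rewrite (mv_absorb _ _ _ HB), mv_nn, mv_zero_l. reflexivity. }
  rewrite E2 at 1. rewrite <- mv_A, E3. reflexivity.
Qed.

Fixpoint nmul (m : nat) (w : B) : B :=
  match m with O => z | S m' => o w (nmul m' w) end.

Lemma nmul_add a b w : o (nmul a w) (nmul b w) = nmul (a + b) w.
Proof.
  induction a; simpl. apply mv_zero_l. rewrite <- mv_A, IHa. reflexivity.
Qed.

Section Simple.
Hypothesis Hs : mv_simple o n z.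

Lemma archimedean w : w <> z -> exists m, nmul m w = n z.
Proof.
  intros Hw. destruct Hs as [Hnt Hid].
  set (J := fun y => exists m, le y (nmul m w)).
  assert (HJ : mv_ideal o n z J).
  { split; [|split].
    - exists 0%nat. apply le_z.
    - intros x y [m Hm] Hxy. exists m. eapply le_trans; eauto.
    - intros x y [a Ha] [b Hb]. exists (a + b)%nat. rewrite <- nmul_add.
      apply le_mono2; auto. }
  destruct (Hid J HJ) as [H | H].
  - exfalso. apply Hw. apply H. exists 1%nat. simpl. rewrite (mv_zero _ _ _ HB). apply le_refl.
  - destruct (H (n z)) as [m Hm]. exists m. unfold mv_le, mv_one in Hm.
    rewrite mv_nn, mv_zero_l in Hm. exact Hm.
Qed.

Lemma chain a b : le a b \/ le b a.
Proof.
  set (u := n (o (n a) b)). set (w := n (o (n b) a)).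
  assert (Hk : o (n u) w = n u).
  { unfold u, w. rewrite mv_nn. pose proof (mv_G (n a) b) as G. rewrite mv_nn in G.
    rewrite (mv_C (n b) a). exact G. }
  assert (Hk' : forall m, o (n u) (nmul m w) = n u).
  { induction m; simpl. apply (mv_zero _ _ _ HB). rewrite mv_A, Hk. exact IHm. }
  destruct (classic (w = z)) as [Hw | Hw].
  - right. unfold mv_le, mv_one. unfold w in Hw. rewrite <- Hw, mv_nn. reflexivity.
  - left. destruct (archimedean w Hw) as [m Hm]. specialize (Hk' m). rewrite Hm in Hk'.
    rewrite (mv_absorb _ _ _ HB) in Hk'. unfold mv_le, mv_one. unfold u in Hk'.
    rewrite mv_nn in Hk'. symmetry; exact Hk'.
Qed.

End Simple.
End MVB.



Section Hold.
Context {B : Type} (o : B -> B -> B) (n : B -> B) (z : B) (HB : is_MV o n z)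
  (Hs : mv_simple o n z) (k : unitQ -> B)
  (Hk0 : k qzero = z)
  (Hkadd : forall r s t, qval t = Rmin (qval r + qval s) 1 -> o (k r) (k s) = k t)
  (Hkneg : forall r s, qval s = 1 - qval r -> n (k r) = k s).

Notation le := (mv_le o n z).

Lemma ex_unitQ x : 0 <= x <= 1 -> isQ x -> { r : unitQ | qval r = x }.
Proof.
  intros H1 H2. apply constructive_indefinite_description. apply unitQ_of; auto.
Qed.

Lemma k_ext r s : qval r = qval s -> k r = k s.
Proof.
  intros H. rewrite <- (Hkadd r qzero s).
  - rewrite Hk0. symmetry. apply (mv_zero _ _ _ HB).
  - rewrite qval_zero. pose proof (qval_bounds r). rcases.
Qed.

Lemma k_one r : qval r = 1 -> k r = n z.
Proof.
  intros H. rewrite <- Hk0. symmetry. apply Hkneg. rewrite qval_zero; lra.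
Qed.

Lemma k_mono r s : qval r <= qval s -> le (k r) (k s).
Proof.
  intros H. pose proof (qval_bounds r); pose proof (qval_bounds s).
  destruct (unitQ_of (qval s - qval r)) as [d Hd]; [lra| apply isQ_minus; apply isQ_qval |].
  apply (le_char o n z HB); auto. exists (k d). symmetry. apply Hkadd. rewrite Hd. rcases.
Qed.

Lemma k_pos d : 0 < qval d -> k d <> z.
Proof.
  intros Hd Hkd. destruct Hs as [Hnt _].
  assert (Hm : forall m, exists r, qval r = Rmin (INR m * qval d) 1 /\ k r = z).
  { induction m.
    - exists qzero. rewrite qval_zero. simpl. split; auto. rcases.
    - destruct IHm as [r [Hr1 Hr2]].
      pose proof (qval_bounds d). pose proof (pos_INR m).
      destruct (unitQ_of (Rmin (INR (S m) * qval d) 1)) as [r' Hr'].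
      { rewrite S_INR. split; rcases. nra. }
      { apply isQ_min. apply isQ_mult. apply isQ_INR. apply isQ_qval. apply isQ_1. }
      exists r'. split; auto. rewrite <- (Hkadd d r r').
      + rewrite Hkd, Hr2. apply (mv_zero _ _ _ HB).
      + rewrite Hr', Hr1, S_INR. rcases. }
  destruct (archimed (/ qval d)) as [Ha _].
  set (N := up (/ qval d)) in *.
  assert (HN : (0 <= N)%Z).
  { apply le_IZR. pose proof (Rinv_0_lt_compat _ Hd). lra. }
  destruct (Hm (Z.to_nat N)) as [r [Hr1 Hr2]].
  rewrite INR_IZR_INZ, Z2Nat.id in Hr1 by exact HN.
  assert (IZR N * qval d >= 1).
  { assert (/ qval d * qval d = 1) by (apply Rinv_l; lra). nra. }
  apply Hnt. unfold mv_one. rewrite <- (k_one r) by (rewrite Hr1; rcases). symmetry; exact Hr2.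
Qed.

Lemma k_mono_inv r s : le (k r) (k s) -> qval r <= qval s.
Proof.
  intros H. apply Rnot_lt_le. intro Hlt.
  pose proof (qval_bounds r); pose proof (qval_bounds s).
  destruct (unitQ_of (1 - qval r)) as [rn Hrn]; [lra| apply isQ_minus; [apply isQ_1|apply isQ_qval]|].
  destruct (unitQ_of (1 - qval r + qval s)) as [t Ht];
    [lra| apply isQ_plus; [apply isQ_minus; [apply isQ_1|apply isQ_qval]|apply isQ_qval]|].
  destruct (unitQ_of (qval r - qval s)) as [tn Htn]; [lra| apply isQ_minus; apply isQ_qval|].
  unfold mv_le, mv_one in H.
  rewrite (Hkneg r rn) in H by lra.
  rewrite (Hkadd rn s t) in H by (rewrite Ht, Hrn; rcases).
  assert (Htn' : k tn = z).
  { rewrite <- (Hkneg t tn) by lra. rewrite H. apply (mv_nn o n z HB); auto. }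
  apply (k_pos tn); auto. lra.
Qed.

Definition Vset (b : B) : R -> Prop := fun x => exists r, x = qval r /\ le (k r) b.
Definition v (b : B) : R := Rsup (Vset b).

Lemma v_lub b : is_lub (Vset b) (v b).
Proof.
  apply Rsup_lub.
  - exists 0. exists qzero. rewrite qval_zero, Hk0. split; auto. apply (le_z o n z HB); auto.
  - exists 1. intros x [r [-> _]]. apply qval_bounds.
Qed.

Lemma v_ge r b : le (k r) b -> qval r <= v b.
Proof. intros H. apply (proj1 (v_lub b)). exists r; auto. Qed.

Lemma v_le r b : le b (k r) -> v b <= qval r.
Proof.
  intros H. apply (proj2 (v_lub b)). intros x [r' [-> Hr']].
  apply k_mono_inv. eapply (le_trans o n z HB); eauto.
Qed.

Lemma v_bounds b : 0 <= v b <= 1.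
Proof.
  split.
  - replace 0 with (qval qzero) by apply qval_zero. apply v_ge. rewrite Hk0. apply (le_z o n z HB); auto.
  - apply (proj2 (v_lub b)). intros x [r [-> _]]. apply qval_bounds.
Qed.

Lemma v_k r : v (k r) = qval r.
Proof.
  apply Rle_antisym; [apply v_le | apply v_ge]; apply (le_refl o n z HB); auto.
Qed.

Lemma v_lt_le r b : qval r < v b -> le (k r) b.
Proof.
  intros H. destruct (chain o n z HB Hs (k r) b) as [|H']; auto.
  apply v_le in H'. lra.
Qed.

Lemma v_gt_le r b : v b < qval r -> le b (k r).
Proof.
  intros H. destruct (chain o n z HB Hs (k r) b) as [H'|]; auto.
  apply v_ge in H'. lra.
Qed.

Lemma v_below b eps : 0 < eps -> exists r, v b - eps < qval r /\ qval r <= v b /\ le (k r) b.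
Proof.
  intros He. pose proof (v_bounds b).
  destruct (Rlt_dec (v b - eps) 0) as [Hlt|Hnlt].
  - exists qzero. rewrite qval_zero, Hk0. repeat split; try lra. apply (le_z o n z HB); auto.
  - destruct (unitQ_between (v b - eps) (v b)) as [r Hr]; try lra.
    exists r. repeat split; try lra. apply v_lt_le; lra.
Qed.

Lemma v_above b eps : 0 < eps -> exists r, qval r < v b + eps /\ v b <= qval r /\ le b (k r).
Proof.
  intros He. pose proof (v_bounds b).
  destruct (Rlt_dec 1 (v b + eps)) as [Hlt|Hnlt].
  - destruct (unitQ_of 1) as [r Hr]; [lra | apply isQ_1 |].
    exists r. rewrite Hr. repeat split; try lra. rewrite k_one by auto. apply (le_one o n z HB); auto.
  - destruct (unitQ_between (v b) (v b + eps)) as [r Hr]; try lra.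
    exists r. repeat split; try lra. apply v_gt_le; lra.
Qed.

Lemma eps_le (x y : R) : (forall eps, 0 < eps -> x <= y + eps) -> x <= y.
Proof.
  intros H. apply Rnot_lt_le. intro Hc. specialize (H ((x - y) / 2)). lra.
Qed.

Lemma v_neg b : v (n b) = 1 - v b.
Proof.
  apply Rle_antisym; apply eps_le; intros eps He.
  - destruct (v_below b eps He) as [r [H1 [H2 H3]]].
    destruct (unitQ_of (1 - qval r)) as [r' Hr'].
    { pose proof (qval_bounds r); lra. }
    { apply isQ_minus; [apply isQ_1 | apply isQ_qval]. }
    assert (le (n b) (k r')).
    { rewrite <- (Hkneg r r') by lra. apply (le_neg o n z HB); auto. }
    apply v_le in H. lra.
  - destruct (v_above b eps He) as [r [H1 [H2 H3]]].
    destruct (unitQ_of (1 - qval r)) as [r' Hr'].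
    { pose proof (qval_bounds r); lra. }
    { apply isQ_minus; [apply isQ_1 | apply isQ_qval]. }
    assert (le (k r') (n b)).
    { rewrite <- (Hkneg r r') by lra. apply (le_neg o n z HB); auto. }
    apply v_ge in H. lra.
Qed.

Lemma v_oplus b b' : v (o b b') = Rmin (v b + v b') 1.
Proof.
  pose proof (v_bounds b); pose proof (v_bounds b').
  apply Rle_antisym; apply eps_le; intros eps He.
  - destruct (v_above b (eps/2)) as [r [H1 [H2 H3]]]; [lra|].
    destruct (v_above b' (eps/2)) as [r' [H1' [H2' H3']]]; [lra|].
    pose proof (qval_bounds r); pose proof (qval_bounds r').
    destruct (unitQ_of (Rmin (qval r + qval r') 1)) as [t Ht].
    { rcases. }
    { apply isQ_min; [apply isQ_plus; apply isQ_qval | apply isQ_1]. }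
    assert (Hl : le (o b b') (k t)).
    { rewrite <- (Hkadd r r' t) by auto. apply (le_mono2 o n z HB); auto. }
    apply v_le in Hl. rewrite Ht in Hl. rcases.
  - destruct (v_below b (eps/2)) as [r [H1 [H2 H3]]]; [lra|].
    destruct (v_below b' (eps/2)) as [r' [H1' [H2' H3']]]; [lra|].
    pose proof (qval_bounds r); pose proof (qval_bounds r').
    destruct (unitQ_of (Rmin (qval r + qval r') 1)) as [t Ht].
    { rcases. }
    { apply isQ_min; [apply isQ_plus; apply isQ_qval | apply isQ_1]. }
    assert (Hl : le (k t) (o b b')).
    { rewrite <- (Hkadd r r' t) by auto. apply (le_mono2 o n z HB); auto. }
    apply v_ge in Hl. rewrite Ht in Hl. rcases.
Qed.

Lemma v_z : v z = 0.
Proof. rewrite <- Hk0, v_k. apply qval_zero. Qed.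

Lemma v_one : v (n z) = 1.
Proof. rewrite v_neg, v_z. lra. Qed.

Lemma v_inj b b' : v b = v b' -> b = b'.
Proof.
  intros Hv.
  assert (Hd : forall x y, v x = v y -> le x y).
  { intros x y Hxy.
    set (d := n (o (n x) y)).
    assert (Hvd : v d = 0).
    { unfold d. rewrite v_neg, v_oplus, v_neg, Hxy. pose proof (v_bounds y). rcases. }
    destruct (classic (d = z)) as [Hz | Hnz].
    - unfold mv_le, mv_one. unfold d in Hz. rewrite <- Hz. rewrite (mv_nn o n z HB). reflexivity.
    - exfalso. destruct (archimedean o n z HB Hs d Hnz) as [m Hm].
      assert (forall m, v (nmul o z m d) = 0).
      { induction m0; simpl. apply v_z. rewrite v_oplus, Hvd, IHm0. rcases. }
      pose proof (H m) as Hx. rewrite Hm, v_one in Hx. lra. }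
  apply le_antisym with (o := o) (n := n) (z := z); auto.
Qed.

End Hold.



Section Main.
Context {A : Type} (oplus : A -> A -> A) (neg : A -> A) (c : unitQ -> A) (ex : A -> A)
  (HM : is_monadic_pavelka oplus neg c ex).

Definition phom (f : A -> unitR) := pavelka_hom oplus neg c u_oplus u_neg u_const f.

Notation leA := (mv_le oplus neg (c qzero)).

Lemma HMV : is_MV oplus neg (c qzero).
Proof. destruct HM as [[H _] _]. exact H. Qed.

Section Hom.
Context (f : A -> unitR) (Hf : phom f).
Lemma ph_oplus x y : val (f (oplus x y)) = Rmin (val (f x) + val (f y)) 1.
Proof. destruct Hf as [H _]. rewrite H. reflexivity. Qed.
Lemma ph_neg x : val (f (neg x)) = 1 - val (f x).
Proof. destruct Hf as [_ [H _]]. rewrite H. reflexivity. Qed.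
Lemma ph_c r : val (f (c r)) = qval r.
Proof. destruct Hf as [_ [_ H]]. rewrite H. reflexivity. Qed.
Lemma ph_one : val (f (mv_one neg (c qzero))) = 1.
Proof. unfold mv_one. rewrite ph_neg, ph_c, qval_zero. lra. Qed.
Lemma ph_mono x y : leA x y -> val (f x) <= val (f y).
Proof.
  unfold mv_le. intros H. apply (f_equal (fun a => val (f a))) in H.
  rewrite ph_oplus, ph_neg, ph_one in H. pose proof (valP (f x)); pose proof (valP (f y)). rcases.
Qed.
Lemma ph_prod x y : val (f (mv_prod oplus neg x y)) = prodR (val (f x)) (val (f y)).
Proof.
  unfold mv_prod, prodR. rewrite ph_neg, ph_oplus, !ph_neg. bnd. rcases.
Qed.
End Hom.

Definition meetA (p q : A) : A := mv_prod oplus neg p (oplus (neg p) q).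
Definition joinA (p q : A) : A := neg (meetA (neg p) (neg q)).

Lemma ph_meet f (Hf : phom f) p q : val (f (meetA p q)) = Rmin (val (f p)) (val (f q)).
Proof.
  unfold meetA. rewrite ph_prod, ph_oplus, ph_neg by auto. unfold prodR. bnd. rcases.
Qed.
Lemma ph_join f (Hf : phom f) p q : val (f (joinA p q)) = Rmax (val (f p)) (val (f q)).
Proof.
  unfold joinA. rewrite ph_neg, ph_meet, !ph_neg by auto. bnd. rcases.
Qed.

Lemma Hmono x y : leA x y -> leA (ex x) (ex y).
Proof. destruct HM as [_ [H _]]. apply H. Qed.
Lemma Hext x : leA x (ex x).
Proof. destruct HM as [_ [_ [H _]]]. apply H. Qed.
Lemma Hidem x : ex (ex x) = ex x.
Proof. destruct HM as [_ [_ [_ [H _]]]]. apply H. Qed.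
Lemma Hnegex x : ex (neg (ex x)) = neg (ex x).
Proof. destruct HM as [_ [_ [_ [_ [H _]]]]]. apply H. Qed.
Lemma Hconst x r : mv_prod oplus neg (c r) (ex x) = ex (mv_prod oplus neg (c r) x).
Proof. destruct HM as [_ [_ [_ [_ [_ H]]]]]. apply H. Qed.

Lemma prod_c0 y : mv_prod oplus neg (c qzero) y = c qzero.
Proof.
  pose proof HMV as HB. unfold mv_prod.
  rewrite (mv_abs_l _ _ _ HB). apply (mv_nn _ _ _ HB).
Qed.

Lemma ex_c0 : ex (c qzero) = c qzero.
Proof.
  rewrite <- (prod_c0 (c qzero)) at 1. rewrite <- Hconst. apply prod_c0.
Qed.

Context (J : Type) (Bj : J -> Type) (oB : forall j, Bj j -> Bj j -> Bj j)
  (nB : forall j, Bj j -> Bj j) (zB : forall j, Bj j) (h : A -> forall j, Bj j)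
  (HBs : forall j, is_MV (oB j) (nB j) (zB j) /\ mv_simple (oB j) (nB j) (zB j))
  (Hh : mv_hom oplus neg (c qzero)
      (fun f g j => oB j (f j) (g j)) (fun f j => nB j (f j)) (fun j => zB j) h)
  (Hinj : forall x y, h x = h y -> x = y).

Definition kj j (r : unitQ) : Bj j := h (c r) j.

Lemma HBj j : is_MV (oB j) (nB j) (zB j). Proof. apply HBs. Qed.
Lemma Hsj j : mv_simple (oB j) (nB j) (zB j). Proof. apply HBs. Qed.
Lemma h_oplus x y j : h (oplus x y) j = oB j (h x j) (h y j).
Proof. destruct Hh as [H _]. rewrite H. reflexivity. Qed.
Lemma h_neg x j : h (neg x) j = nB j (h x j).
Proof. destruct Hh as [_ [H _]]. rewrite H. reflexivity. Qed.
Lemma Hk0j j : kj j qzero = zB j.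
Proof. destruct Hh as [_ [_ H]]. unfold kj. rewrite H. reflexivity. Qed.
Lemma Hkaddj j : forall r s t, qval t = Rmin (qval r + qval s) 1 -> oB j (kj j r) (kj j s) = kj j t.
Proof.
  intros r s t Ht. unfold kj. rewrite <- h_oplus. f_equal.
  destruct HM as [[_ [H _]] _]. apply H; auto.
Qed.
Lemma Hknegj j : forall r s, qval s = 1 - qval r -> nB j (kj j r) = kj j s.
Proof.
  intros r s Ht. unfold kj. rewrite <- h_neg. f_equal.
  destruct HM as [[_ [_ H]] _]. apply H; auto.
Qed.

Definition vj j (b : Bj j) : R := v (oB j) (nB j) (zB j) (kj j) b.
Lemma vj_bounds j b : 0 <= vj j b <= 1.
Proof. apply (v_bounds _ _ _ (HBj j) (kj j) (Hk0j j)). Qed.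

Definition eta j (y : A) : unitR := exist _ (vj j (h y j)) (vj_bounds j (h y j)).

Lemma eta_hom j : phom (eta j).
Proof.
  split; [|split].
  - intros x y. apply unitR_eq. simpl. unfold vj. rewrite h_oplus.
    apply (v_oplus _ _ _ (HBj j) (Hsj j) (kj j) (Hk0j j) (Hkaddj j) (Hknegj j)).
  - intros x. apply unitR_eq. simpl. unfold vj. rewrite h_neg.
    apply (v_neg _ _ _ (HBj j) (Hsj j) (kj j) (Hk0j j) (Hkaddj j) (Hknegj j)).
  - intros r. apply unitR_eq. simpl. unfold vj.
    apply (v_k _ _ _ (HBj j) (Hsj j) (kj j) (Hk0j j) (Hkaddj j) (Hknegj j)).
Qed.

Lemma eta_inj a b : (forall j, val (eta j a) = val (eta j b)) -> a = b.
Proof.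
  intros H. apply Hinj. apply functional_extensionality_dep. intro j.
  apply (v_inj _ _ _ (HBj j) (Hsj j) (kj j) (Hk0j j) (Hkaddj j) (Hknegj j)).
  apply H.
Qed.

Lemma eta_le a b : (forall j, val (eta j a) <= val (eta j b)) -> leA a b.
Proof.
  intros H. unfold mv_le. apply eta_inj. intro j.
  rewrite ph_oplus, ph_neg, ph_one by apply eta_hom.
  specialize (H j). bnd. rcases.
Qed.

Lemma eta_eq_le a b : leA a b -> leA b a -> a = b.
Proof.
  intros H1 H2. apply eta_inj. intro j.
  apply Rle_antisym; apply ph_mono; auto; apply eta_hom.
Qed.

Lemma ex_join f (Hf : phom f) p q :
  val (f (ex (joinA p q))) <= Rmax (val (f (ex p))) (val (f (ex q))).
Proof.
  set (P := ex p). set (Q := ex q).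
  set (M := meetA (neg P) (neg Q)).
  assert (HnP : ex (neg P) = neg P) by apply Hnegex.
  assert (HnQ : ex (neg Q) = neg Q) by apply Hnegex.
  assert (HM1 : ex M = M).
  { apply eta_eq_le.
    - apply eta_le. intro j. unfold M at 2. rewrite ph_meet by apply eta_hom.
      apply Rmin_glb.
      + rewrite <- HnP. apply ph_mono; [apply eta_hom|]. apply Hmono.
        apply eta_le. intro j'. unfold M. rewrite ph_meet by apply eta_hom. apply Rmin_l.
      + rewrite <- HnQ. apply ph_mono; [apply eta_hom|]. apply Hmono.
        apply eta_le. intro j'. unfold M. rewrite ph_meet by apply eta_hom. apply Rmin_r.
    - apply Hext. }
  assert (HM2 : ex (neg M) = neg M).
  { rewrite <- HM1 at 1 2. apply Hnegex. }
  assert (Hle : leA (joinA p q) (neg M)).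
  { apply eta_le. intro j. unfold M. rewrite ph_join, ph_neg, ph_meet, !ph_neg by apply eta_hom.
    pose proof (ph_mono _ (eta_hom j) _ _ (Hext p)).
    pose proof (ph_mono _ (eta_hom j) _ _ (Hext q)). fold P Q in H, H0.
    bnd. rcases. }
  apply Hmono in Hle. rewrite HM2 in Hle. apply (ph_mono f Hf) in Hle.
  eapply Rle_trans; [exact Hle|].
  unfold M. rewrite ph_neg, ph_meet, !ph_neg by auto. bnd. rcases.
Qed.


Section Key.
Context (phi : A -> unitR) (Hphi : phom phi) (x : A).
Let t := val (phi (ex x)).
Hypothesis Ht : 0 < t.

Lemma finite_lemma (l : list A) eps : 0 < eps ->
  exists j, forall y, In y l -> val (eta j y) - val (eta j x) <= val (phi (ex y)) - t + eps.
Proof.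
  intros He. apply NNPP; intro Hno.
  assert (Hall : forall j, exists y, In y l /\ val (phi (ex y)) - t + eps < val (eta j y) - val (eta j x)).
  { intro j. apply NNPP; intro H2. apply Hno. exists j. intros y Hy. apply Rnot_lt_le. intro H3.
    apply H2. exists y. split; auto. }
  assert (Ht1 : t <= 1) by (unfold t; bnd; lra).
  assert (Hmex : exists m : unitQ, Rmax 0 (t - eps/2) < qval m < t).
  { apply unitQ_between; unfold Rmax; rcases. }
  destruct Hmex as [m Hm].
  assert (Ha : forall y, exists a : unitQ,
             val (phi (ex y)) - t + qval m < qval a < val (phi (ex y)) - t + qval m + eps).
  { intro y. pose proof (valP (phi (ex y))). apply unitQ_between; unfold Rmax in Hm; rcases. }
  set (a := fun y => proj1_sig (constructive_indefinite_description _ (Ha y))).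
  assert (Ha' : forall y, val (phi (ex y)) - t + qval m < qval (a y) < val (phi (ex y)) - t + qval m + eps).
  { intro y. unfold a. destruct (constructive_indefinite_description _ (Ha y)); auto. }
  assert (Hra : forall y, exists r : unitQ, qval r = 1 - qval (a y)).
  { intro y. pose proof (qval_bounds (a y)). apply unitQ_of; [lra|].
    apply isQ_minus; [apply isQ_1|apply isQ_qval]. }
  set (ra := fun y => proj1_sig (constructive_indefinite_description _ (Hra y))).
  assert (Hra' : forall y, qval (ra y) = 1 - qval (a y)).
  { intro y. unfold ra. destruct (constructive_indefinite_description _ (Hra y)); auto. }
  destruct (unitQ_of (1 - qval m)) as [rm Hrm].
  { pose proof (qval_bounds m); lra. }
  { apply isQ_minus; [apply isQ_1|apply isQ_qval]. }
  set (x' := mv_prod oplus neg (c rm) x).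
  set (term := fun y => mv_prod oplus neg (c (ra y)) y).
  set (fw := fun l0 => fold_right (fun y acc => joinA (term y) acc) (c qzero) l0).
  assert (Hin : forall f, phom f -> forall l0 y, In y l0 -> val (f (term y)) <= val (f (fw l0))).
  { intros f Hf l0. induction l0 as [|y0 l0 IH]; intros y Hy; [destruct Hy|].
    simpl. rewrite ph_join by auto. destruct Hy as [<- | Hy].
    - apply Rmax_l.
    - eapply Rle_trans; [apply IH; auto | apply Rmax_r]. }
  assert (Hxw : leA x' (fw l)).
  { apply eta_le. intro j. destruct (Hall j) as [y [Hy Hyj]].
    eapply Rle_trans; [|apply (Hin _ (eta_hom j) l y Hy)].
    unfold x', term. rewrite !ph_prod, !ph_c by apply eta_hom.
    rewrite Hrm, Hra'. specialize (Ha' y). unfold prodR. bnd. rcases. }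
  apply Hmono in Hxw. apply (ph_mono phi Hphi) in Hxw.
  assert (HL : val (phi (ex x')) = t - qval m).
  { unfold x'. rewrite <- Hconst, ph_prod, ph_c by auto. rewrite Hrm. fold t.
    unfold prodR, Rmax in *. rcases. }
  assert (Hterm : forall y, val (phi (ex (term y))) < t - qval m).
  { intro y. unfold term. rewrite <- Hconst, ph_prod, ph_c by auto. rewrite Hra'.
    specialize (Ha' y). unfold prodR, Rmax in *. bnd. rcases. }
  assert (Hbd : forall l0 Bd, (forall y, In y l0 -> val (phi (ex (term y))) <= Bd) -> 0 <= Bd ->
                val (phi (ex (fw l0))) <= Bd).
  { intro l0. induction l0 as [|y0 l0 IH]; intros Bd H1 H2; simpl.
    - rewrite ex_c0, ph_c, qval_zero by auto. auto.
    - eapply Rle_trans; [apply ex_join; auto|]. apply Rmax_lub.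
      + apply H1. left; auto.
      + apply IH; auto. intros y Hy. apply H1. right; auto. }
  set (Bd := fold_right (fun y acc => Rmax (val (phi (ex (term y)))) acc) 0 l).
  assert (HBd1 : forall y, In y l -> val (phi (ex (term y))) <= Bd).
  { unfold Bd. clear -l. induction l as [|y0 l0 IH]; intros y Hy; [destruct Hy|].
    simpl. destruct Hy as [<-|Hy]; [apply Rmax_l|]. eapply Rle_trans; [apply IH; auto|apply Rmax_r]. }
  assert (HBd2 : 0 <= Bd /\ Bd < t - qval m).
  { unfold Bd. clear -Hterm Hm. induction l as [|y0 l0 IH]; simpl.
    - unfold Rmax in Hm; rcases.
    - pose proof (Hterm y0). pose proof (valP (phi (ex (term y0)))). unfold Rmax at 1. rcases. }
  pose proof (Hbd l Bd HBd1 (proj1 HBd2)). lra.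
Qed.

End Key.

Lemma key_lemma (phi : A -> unitR) (Hphi : phom phi) (x : A) :
  0 < val (phi (ex x)) ->
  exists psi : A -> unitR, phom psi /\
    forall y, val (psi y) - val (phi (ex y)) <= val (psi x) - val (phi (ex x)).
Proof.
  intros Ht. set (t := val (phi (ex x))) in *.
  set (cond := fun j (l : list A) eps => forall y, In y l ->
          val (eta j y) - val (eta j x) <= val (phi (ex y)) - t + eps).
  set (F0 := fun (S : J -> Prop) => exists l eps, 0 < eps /\ forall j, cond j l eps -> S j).
  destruct (UF.ultra J F0) as [U [HU0 [HUI [HUS [HUex HUu]]]]].
  - exists nil, 1. split; [lra|]. auto.
  - intros P Q [l1 [e1 [He1 H1]]] [l2 [e2 [He2 H2]]].
    exists (l1 ++ l2), (Rmin e1 e2). split; [apply Rmin_pos; auto|].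
    intros j Hc. split; [apply H1 | apply H2]; intros y Hy;
      [specialize (Hc y (in_or_app _ _ _ (or_introl Hy))) |
       specialize (Hc y (in_or_app _ _ _ (or_intror Hy)))];
      unfold Rmin in Hc; rcases.
  - intros P Q HPQ [l [e [He H]]]. exists l, e. split; auto.
  - intros P [l [e [He H]]]. destruct (finite_lemma phi Hphi x Ht l e He) as [j Hj].
    exists j. apply H. exact Hj.
  - set (Pset := fun y r => 0 <= r <= 1 /\ U (fun j => r <= val (eta j y))).
    set (psi0 := fun y => Rsup (Pset y)).
    assert (HUT : U (fun _ => True)) by (apply HU0; exists nil, 1; split; [lra|auto]).
    assert (Hlub : forall y, is_lub (Pset y) (psi0 y)).
    { intro y. apply Rsup_lub.
      - exists 0. split; [lra|]. eapply HUS; [|exact HUT]. intros j _. pose proof (valP (eta j y)); lra.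
      - exists 1. intros r [Hr _]. lra. }
    assert (Hb : forall y, 0 <= psi0 y <= 1).
    { intro y. split.
      - apply (proj1 (Hlub y)). split; [lra|]. eapply HUS; [|exact HUT]. intros j _. pose proof (valP (eta j y)); lra.
      - apply (proj2 (Hlub y)). intros r [Hr _]. lra. }
    assert (Hnear : forall y e, 0 < e ->
              U (fun j => psi0 y - e <= val (eta j y) /\ val (eta j y) <= psi0 y + e)).
    { intros y e He. apply HUI.
      - assert (Hex : exists r, Pset y r /\ psi0 y - e < r).
        { apply NNPP; intro Hn. assert (psi0 y <= psi0 y - e); [|lra].
          apply (proj2 (Hlub y)). intros r Hr. apply Rnot_lt_le. intro Hc. apply Hn.
          exists r; auto. }
        destruct Hex as [r [[_ Hr] Hlt]]. eapply HUS; [|exact Hr]. intros j Hj. simpl in *. lra.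
      - destruct (HUu (fun j => val (eta j y) <= psi0 y + e)) as [H|H]; auto.
        exfalso. destruct (Rle_dec (psi0 y + e) 1) as [Hle|Hgt].
        + assert (Pset y (psi0 y + e)).
          { split; [pose proof (Hb y); lra|]. eapply HUS; [|exact H]. intros j Hj. apply Rlt_le, Rnot_le_lt; exact Hj. }
          apply (proj1 (Hlub y)) in H0. lra.
        + destruct (HUex _ H) as [j Hj]. apply Hj. pose proof (valP (eta j y)); lra. }
    set (psi := fun y => exist (fun r => 0 <= r <= 1) (psi0 y) (Hb y)).
    assert (Hpick : forall P Q R : J -> Prop, U P -> U Q -> U R -> exists j, P j /\ Q j /\ R j).
    { intros P Q R HP HQ HR. destruct (HUex _ (HUI _ _ HP (HUI _ _ HQ HR))) as [j Hj]. exists j; auto. }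
    exists psi. split; [split; [|split]|].
    + intros y y'. apply unitR_eq. simpl.
      apply Rle_antisym; apply eps_le; intros e He;
      destruct (Hpick _ _ _ (Hnear (oplus y y') (e/4) ltac:(lra)) (Hnear y (e/4) ltac:(lra))
                 (Hnear y' (e/4) ltac:(lra))) as [j [H1 [H2 H3]]];
      rewrite (ph_oplus _ (eta_hom j)) in H1; pose proof (Hb y); pose proof (Hb y'); bnd; rcases.
    + intros y. apply unitR_eq. simpl.
      apply Rle_antisym; apply eps_le; intros e He;
      destruct (Hpick _ _ _ (Hnear (neg y) (e/4) ltac:(lra)) (Hnear y (e/4) ltac:(lra))
                 (Hnear y (e/4) ltac:(lra))) as [j [H1 [H2 H3]]];
      rewrite (ph_neg _ (eta_hom j)) in H1; pose proof (Hb y); bnd; lra.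
    + intros r. apply unitR_eq. simpl.
      apply Rle_antisym; apply eps_le; intros e He;
      destruct (Hpick _ _ _ (Hnear (c r) (e/4) ltac:(lra)) HUT HUT) as [j [H1 _]];
      rewrite (ph_c _ (eta_hom j)) in H1; lra.
    + intros y. simpl. apply eps_le. intros e He.
      assert (HF : U (fun j => cond j (y :: nil) (e/3))).
      { apply HU0. exists (y :: nil), (e/3). split; [lra|]. auto. }
      destruct (Hpick _ _ _ HF (Hnear y (e/3) ltac:(lra)) (Hnear x (e/3) ltac:(lra)))
        as [j [H1 [H2 H3]]].
      specialize (H1 y (or_introl eq_refl)). fold t. lra.
Qed.
End Main.



Definition PH {A : Type} (oplus : A -> A -> A) (neg : A -> A) (c : unitQ -> A) :=
  {f : A -> unitR | phom oplus neg c f}.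
Definition fn {A : Type} {oplus : A -> A -> A} {neg : A -> A} {c : unitQ -> A}
  (p : PH oplus neg c) : A -> unitR := proj1_sig p.

Lemma part2 : forall (A : Type) (oplus : A -> A -> A) (neg : A -> A) (c : unitQ -> A) (ex : A -> A),
     is_monadic_pavelka oplus neg c ex ->
     mv_semisimple oplus neg (c qzero) ->
     exists (I : Type) (Rel : I -> I -> unitR) (e : A -> (I -> unitR)),
       fuzzy_equiv Rel /\
       pavelka_hom oplus neg c (@pw_oplus I) (@pw_neg I) (@pw_const I) e /\
       (forall x y, e x = e y -> x = y) /\
       (forall x, e (ex x) = gR Rel (e x)).
Proof.
  intros A oplus neg c ex HM HS.
  destruct HS as [J [Bj [oB [nB [zB [h [HBs [Hh [Hinj _]]]]]]]]].
  set (I := PH oplus neg c).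
  set (Dset := fun (p q : I) r => exists y, r = Rmax 0 (val (fn q y) - val (fn p (ex y)))).
  set (D := fun p q => Rsup (Dset p q)).
  assert (Dlub : forall p q, is_lub (Dset p q) (D p q)).
  { intros p q. apply Rsup_lub.
    - exists (Rmax 0 (val (fn q (c qzero)) - val (fn p (ex (c qzero))))).
      exists (c qzero). reflexivity.
    - exists 1. intros r [y ->]. pose proof (valP (fn q y)).
      pose proof (valP (fn p (ex y))). rcases. }
  assert (D_ge : forall p q y, Rmax 0 (val (fn q y) - val (fn p (ex y))) <= D p q).
  { intros p q y. apply (proj1 (Dlub p q)). exists y; auto. }
  assert (D_le : forall p q T, (forall y, Rmax 0 (val (fn q y) - val (fn p (ex y))) <= T) ->
                  D p q <= T).
  { intros p q T H. apply (proj2 (Dlub p q)). intros r [y ->]. auto. }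
  assert (D_b : forall p q, 0 <= D p q <= 1).
  { intros p q. split.
    - eapply Rle_trans; [|apply (D_ge p q (c qzero))]. apply Rmax_l.
    - apply D_le. intros y. pose proof (valP (fn q y)).
      pose proof (valP (fn p (ex y))). rcases. }
  assert (Hext' : forall (p : I) y, val (fn p y) <= val (fn p (ex y))).
  { intros p y. apply (ph_mono oplus neg c (fn p) (proj2_sig p)). apply (Hext oplus neg c ex HM). }
  assert (Rb : forall p q, 0 <= 1 - D p q <= 1) by (intros p q; pose proof (D_b p q); lra).
  set (Rel := fun p q => exist (fun r => 0 <= r <= 1) (1 - D p q) (Rb p q)).
  exists I, Rel, (fun x (p : I) => fn p x).
  split; [|split; [|split]].
  -
    split; [|split].
    + intro p. simpl. assert (D p p <= 0); [|pose proof (D_b p p); lra].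
      apply D_le. intro y. pose proof (Hext' p y). rcases.
    + intros p q. apply unitR_eq. simpl. f_equal.
      assert (Hs : forall p q, D p q <= D q p).
      { intros p0 q0. apply D_le. intro y.
        eapply Rle_trans; [|apply (D_ge q0 p0 (neg (ex y)))].
        rewrite (Hnegex oplus neg c ex HM).
        rewrite (ph_neg oplus neg c (fn p0) (proj2_sig p0)), (ph_neg oplus neg c (fn q0) (proj2_sig q0)).
        pose proof (Hext' q0 y). bnd. rcases. }
      apply Rle_antisym; auto.
    + intros i j k. rewrite val_uprod. simpl.
      assert (D i k <= D i j + D j k).
      { apply D_le. intro y. pose proof (D_ge j k y). pose proof (D_ge i j (ex y)).
        rewrite (Hidem oplus neg c ex HM) in H0. pose proof (D_b i j); pose proof (D_b j k).
        unfold Rmax in *. rcases. }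
      pose proof (D_b i j); pose proof (D_b j k); pose proof (D_b i k).
      unfold prodR. rcases.
  -
    split; [|split].
    + intros x y. apply functional_extensionality. intro p.
      destruct (proj2_sig p) as [H _]. apply H.
    + intros x. apply functional_extensionality. intro p.
      destruct (proj2_sig p) as [_ [H _]]. apply H.
    + intros r. apply functional_extensionality. intro p.
      destruct (proj2_sig p) as [_ [_ H]]. apply H.
  -
    intros x y Hxy. apply (eta_inj oplus neg c ex HM J Bj oB nB zB h HBs Hh Hinj).
    intro j. set (p := exist (fun f => phom oplus neg c f) _ (eta_hom oplus neg c ex HM J Bj oB nB zB h HBs Hh j) : I).
    apply (f_equal (fun g => val (g p))) in Hxy. exact Hxy.
  -
    intro x. apply functional_extensionality. intro p. apply unitR_eq.
    set (t := val (fn p (ex x))).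
    assert (Htb : 0 <= t <= 1) by apply valP.
    assert (Hlub : is_lub (gR_set Rel (fun q : I => fn q x) p) t).
    { split.
      - intros r [q ->]. rewrite val_uprod. simpl.
        pose proof (D_ge p q x). pose proof (valP (fn q x)).
        pose proof (valP (fn p (ex x))). fold t in H. unfold prodR, Rmax in *. rcases.
      - intros ub Hub.
        assert (Hub0 : 0 <= ub).
        { eapply Rle_trans; [|apply Hub; exists p; reflexivity]. rewrite val_uprod. apply prodR_nonneg. }
        destruct (Rle_dec t 0) as [Ht0|Ht0]; [lra|].
        destruct (key_lemma oplus neg c ex HM J Bj oB nB zB h HBs Hh Hinj (fn p) (proj2_sig p) x)
          as [psi [Hpsi Hk]]; [fold t; lra|].
        set (q := exist (fun f => phom oplus neg c f) psi Hpsi : I).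
        assert (H1 : prodR (1 - D p q) (val (psi x)) <= ub).
        { apply Hub. exists q. rewrite val_uprod. reflexivity. }
        assert (H0 : 0 <= val (psi x) - t).
        { pose proof (Hk (mv_one neg (c qzero))) as H.
          rewrite (ph_one oplus neg c psi Hpsi) in H.
          pose proof (Hext' p (mv_one neg (c qzero))) as He1.
          rewrite (ph_one oplus neg c (fn p) (proj2_sig p)) in He1.
          pose proof (valP (fn p (ex (mv_one neg (c qzero))))). fold t in H. lra. }
        assert (H2 : D p q <= val (psi x) - t).
        { apply D_le. intro y. simpl. pose proof (Hk y). fold t in H. unfold Rmax; rcases. }
        pose proof (valP (psi x)). unfold prodR, Rmax in H1. rcases. }
    apply (lub_unique _ _ _ Hlub). apply gR_lub.
Qed.


Theorem theorem15 :
  (* (i) *)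
  (forall (I : Type) (Rel : I -> I -> unitR),
     fuzzy_equiv Rel ->
     is_monadic_pavelka (@pw_oplus I) (@pw_neg I) (@pw_const I) (gR Rel)) /\
  (* (ii) *)
  (forall (A : Type) (oplus : A -> A -> A) (neg : A -> A) (c : unitQ -> A) (ex : A -> A),
     is_monadic_pavelka oplus neg c ex ->
     mv_semisimple oplus neg (c qzero) ->
     exists (I : Type) (Rel : I -> I -> unitR) (e : A -> (I -> unitR)),
       fuzzy_equiv Rel /\
       pavelka_hom oplus neg c (@pw_oplus I) (@pw_neg I) (@pw_const I) e /\
       (forall x y, e x = e y -> x = y) /\
       (forall x, e (ex x) = gR Rel (e x))).
Proof.
  split; [exact part1 | exact part2].
Qed.
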